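(* Let $P$ be a saturated toric sharp monoid, let $v_1,\dots,v_d$ be the first lattice points on the $d$ extremal rays of the dual cone $C(P)^{\vee}$, let $F(P)$ be the free monoid on $v_1,\dots,v_d$, and let $i:P\rightarrow F(P)$ be the morphism $p\mapsto (v_1(p),\dots,v_d(p))$. Then $i$ is exact. Moreover, for any exact morphism $i':P\rightarrow F$ to a free monoid $F$ of rank $d$, there is a unique monoid morphism $j:F(P)\rightarrow F$ such that $i'=j\circ i$.
   Context: A saturated toric sharp monoid is a finitely generated, integral, saturated monoid $P$ with no nontrivial units and with $P^{gp}$ torsion-free. $C(P)$ denotes the rational polyhedral cone generated by $P$ in $P^{gp}\otimes\mathbb{Q}$, and $C(P)^{\vee}\subset \mathrm{Hom}(P^{gp},\mathbb{Q})$ its dual cone; lattice points of $C(P)^{\vee}$ are elements of $\mathrm{Hom}(P^{gp},\mathbb{Z})$ lying in it. A morphism $f:P\rightarrow Q$ of integral monoids is exact if the square formed by $f$, $f^{gp}:P^{gp}\to Q^{gp}$ and the inclusions $P\to P^{gp}$, $Q\to Q^{gp}$ is cartesian as a diagram of sets, i.e. $P=(f^{gp})^{-1}(Q)$. *)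

(* Defs.v *)
From mathcomp Require Import all_boot all_order all_algebra.
Set Implicit Arguments. Unset Strict Implicit. Unset Printing Implicit Defensive.
Import Order.TTheory GRing.Theory Num.Theory.
Local Open Scope ring_scope.

(* A saturated toric sharp monoid is modelled (up to isomorphism) as a
   submonoid P of the lattice Z^n = 'cV[int]_n with P^gp = Z^n. *)

Definition toric_sharp_saturated (n : nat) (P : 'cV[int]_n -> Prop) : Prop :=
  [/\ P 0 /\ (forall a b, P a -> P b -> P (a + b)),
      (exists (m : nat) (g : 'I_m -> 'cV[int]_n),
          (forall k, P (g k)) /\
          forall x, P x -> exists c : 'I_m -> nat, x = \sum_(k < m) g k *+ c k),
      (forall (x : 'cV[int]_n) (m : nat), (0 < m)%N -> P (x *+ m) -> P x),
      (forall x, P x -> P (- x) -> x = 0) &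
      (* P^gp is the whole lattice Z^n (hence torsion free) *)
      (forall x, exists a b, [/\ P a, P b & x = a - b])].

Definition dpair (n : nat) (u : 'cV[rat]_n) (x : 'cV[int]_n) : rat :=
  \sum_(k < n) u k 0 * (x k 0)%:~R.

Definition toQ (n : nat) (v : 'cV[int]_n) : 'cV[rat]_n := map_mx intr v.

Definition in_dual (n : nat) (P : 'cV[int]_n -> Prop) (u : 'cV[rat]_n) : Prop :=
  forall x, P x -> 0 <= dpair u x.

Definition extremal_ray (n : nat) (P : 'cV[int]_n -> Prop) (u : 'cV[rat]_n) : Prop :=
  [/\ u != 0, in_dual P u &
      forall a b, in_dual P a -> in_dual P b -> a + b = u ->
        exists c : rat, 0 <= c /\ a = c *: u].

Definition first_lattice_point (n : nat) (P : 'cV[int]_n -> Prop)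
    (v : 'cV[int]_n) : Prop :=
  extremal_ray P (toQ v) /\
  forall c : rat, 0 < c -> (exists w : 'cV[int]_n, toQ w = c *: toQ v) -> 1 <= c.

(* monoid morphism P -> N^d (only values on P matter) *)
Definition monoid_mor (n d : nat) (P : 'cV[int]_n -> Prop)
    (f : 'cV[int]_n -> 'cV[nat]_d) : Prop :=
  f 0 = 0 /\ forall a b, P a -> P b -> f (a + b) = f a + f b.

(* exactness: P = (f^gp)^{-1}(N^d), where P^gp = {a - b} and
   f^gp (a - b) = f a - f b *)
Definition exact_mor (n d : nat) (P : 'cV[int]_n -> Prop)
    (f : 'cV[int]_n -> 'cV[nat]_d) : Prop :=
  forall a b, P a -> P b -> (forall k, f b k ord0 <= f a k ord0)%N -> P (a - b).

Definition free_mor (d e : nat) (j : 'cV[nat]_d -> 'cV[nat]_e) : Prop :=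
  j 0 = 0 /\ forall x y, j (x + y) = j x + j y.

Definition canon_map (n d : nat) (v : 'I_d -> 'cV[int]_n) (p : 'cV[int]_n)
  : 'cV[nat]_d :=
  \col_(k < d) absz (\sum_(l < n) v k l 0 * p l 0).

(* Main.v *)
Require Import Defs.
From mathcomp Require Import all_boot all_order all_algebra.
From mathcomp Require Import ring lra.
From Stdlib Require Classical_Prop ClassicalEpsilon.
Import Order.TTheory GRing.Theory Num.Theory.
Set Implicit Arguments. Unset Strict Implicit.
Local Open Scope ring_scope.


Definition dot n (u x : 'cV[rat]_n) : rat := \sum_k u k 0 * x k 0.

Section Dot.
Variable n : nat.
Implicit Types u v x y : 'cV[rat]_n.
Lemma dotDl u v x : dot (u + v) x = dot u x + dot v x.
Proof. by rewrite /dot -big_split; apply: eq_bigr => k _; rewrite mxE mulrDl. Qed.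
Lemma dotDr u x y : dot u (x + y) = dot u x + dot u y.
Proof. by rewrite /dot -big_split; apply: eq_bigr => k _; rewrite mxE mulrDr. Qed.
Lemma dotZl c u x : dot (c *: u) x = c * dot u x.
Proof. by rewrite /dot mulr_sumr; apply: eq_bigr => k _; rewrite mxE mulrA. Qed.
Lemma dotZr c u x : dot u (c *: x) = c * dot u x.
Proof. by rewrite /dot mulr_sumr; apply: eq_bigr => k _; rewrite mxE mulrCA. Qed.
Lemma dotNl u x : dot (- u) x = - dot u x.
Proof. by rewrite -scaleN1r dotZl mulN1r. Qed.
Lemma dotNr u x : dot u (- x) = - dot u x.
Proof. by rewrite -scaleN1r dotZr mulN1r. Qed.
Lemma dotBl u v x : dot (u - v) x = dot u x - dot v x.
Proof. by rewrite dotDl dotNl. Qed.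
Lemma dotBr u x y : dot u (x - y) = dot u x - dot u y.
Proof. by rewrite dotDr dotNr. Qed.
Lemma dot0l x : dot 0 x = 0.
Proof. by rewrite -(scale0r (0 : 'cV[rat]_n)) dotZl mul0r. Qed.
Lemma dot0r x : dot x 0 = 0.
Proof. by rewrite -(scale0r (0 : 'cV[rat]_n)) dotZr mul0r. Qed.
Lemma dotC u x : dot u x = dot x u.
Proof. by apply: eq_bigr => k _; rewrite mulrC. Qed.
Lemma dot_gt0 x : x != 0 -> 0 < dot x x.
Proof.
move=> nz; rewrite lt_def; apply/andP; split; last first.
  by rewrite /dot sumr_ge0 // => k _; rewrite -expr2 sqr_ge0.
apply/negP => H0; move: H0; rewrite /dot psumr_eq0; last first.
  by move=> k _; rewrite -expr2 sqr_ge0.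
move=> /allP H; apply/negP: nz; rewrite negbK; apply/eqP/matrixP => i j.
rewrite (ord1 j) mxE; have := H i (mem_index_enum i).
by rewrite mulf_eq0 orbb => /eqP.
Qed.
End Dot.

Fixpoint incone n (gs : seq 'cV[rat]_n) (x : 'cV[rat]_n) : Prop :=
  match gs with
  | [::] => x = 0
  | g :: gs' => exists2 c, 0 <= c & incone gs' (x - c *: g)
  end.

Lemma incone_cons n (gs : seq 'cV[rat]_n) g w c :
  0 <= c -> incone gs w -> incone (g :: gs) (w + c *: g).
Proof. by move=> c0 H; exists c => //; rewrite addrK. Qed.

Lemma incone_dot n (gs : seq 'cV[rat]_n) u x :
  (forall y, y \in gs -> 0 <= dot u y) -> incone gs x -> 0 <= dot u x.
Proof.
elim: gs x => [|g gs IH] x Hy /=; first by move=> ->; rewrite dot0r.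
case=> c c0 Hc.
have -> : dot u x = dot u (x - c *: g) + c * dot u g.
  by rewrite dotBr dotZr subrK.
apply: addr_ge0; last by rewrite mulr_ge0 // Hy // mem_head.
by apply: IH => // y yin; apply: Hy; rewrite in_cons yin orbT.
Qed.

Lemma incone_map n (g : 'cV[rat]_n) (beta : 'cV[rat]_n -> rat) gs z :
  (forall y, y \in gs -> beta y <= 0) ->
  incone (map (fun y => y - beta y *: g) gs) z ->
  exists2 s, s <= 0 & incone gs (z + s *: g).
Proof.
elim: gs z => [|y gs IH] z Hb /=; first by move=> ->; exists 0; rewrite ?scale0r ?addr0.
case=> c c0 Hc.
have [s s0 Hs] := IH _ (fun y' yin => Hb y' (mem_behead (s := y :: gs) yin)) Hc.
exists (c * beta y + s).
  by have := Hb y (mem_head _ _); nra.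
exists c => //.
suff -> : z + (c * beta y + s) *: g - c *: y = z - c *: (y - beta y *: g) + s *: g by [].
by apply/matrixP => i j; rewrite !mxE; ring.
Qed.

Lemma farkas n (gs : seq 'cV[rat]_n) x :
  ~ incone gs x ->
  exists u, (forall y, y \in gs -> 0 <= dot u y) /\ dot u x < 0.
Proof.
move: {2}(size gs) (erefl (size gs)) => k.
elim: k gs x => [|k IH] [|g gs'] x //= Hk Hn.
  exists (- x); split => // ; rewrite dotNl oppr_lt0 dot_gt0 //.
  by apply/eqP => Hx; apply: Hn.
have nx : ~ incone gs' x.
  by move=> H; apply: Hn; exists 0 => //; rewrite scale0r subr0.
case: Hk => Hk.
have [u [Hu Hux]] := IH gs' x Hk nx.
case: (lerP 0 (dot u g)) => Hug.
  exists u; split => // y; rewrite in_cons => /orP [/eqP -> //|]; exact: Hu.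
set a := dot u g.
have an0 : a != 0 by rewrite lt_eqF.
have ainv : a^-1 < 0 by rewrite invr_lt0.
pose beta y := dot u y / a.
pose phi y := y - beta y *: g.
pose x' := x - (dot u x / a) *: g.
have nx' : ~ incone (map phi gs') x'.
  move=> H; apply: Hn.
  have Hb : forall y, y \in gs' -> beta y <= 0.
    by move=> y yin; have := Hu y yin; rewrite /beta; nra.
  have [s s0 Hs] := incone_map Hb H.
  exists (dot u x / a - s).
    have : 0 < dot u x / a by rewrite /a; nra.
    lra.
  suff -> : x - (dot u x / a - s) *: g = x' + s *: g by [].
  by apply/matrixP => i j; rewrite !mxE; ring.
have [u' [Hu' Hux']] := IH (map phi gs') x' ltac:(by rewrite size_map) nx'.
exists (u' - (dot u' g / a) *: u); split.
  move=> y; rewrite in_cons => /orP [/eqP ->|yin].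
    rewrite dotBl dotZl -/a.
    by have -> : dot u' g - dot u' g / a * a = 0 by field.
  have := Hu' (phi y) (map_f phi yin).
  rewrite /phi /beta dotBl dotZl dotBr dotZr.
  suff -> : dot u' y - dot u' g / a * dot u y = dot u' y - dot u y / a * dot u' g by [].
  by field.
move: Hux'; rewrite /x' dotBl dotZl dotBr dotZr.
suff -> : dot u' x - dot u' g / a * dot u x = dot u' x - dot u x / a * dot u' g by [].
by field.
Qed.


Lemma neq0_lt (x : rat) : x < 0 -> x != 0.
Proof. by move=> h; rewrite lt_eqF. Qed.

Lemma count_le_in (T : eqType) (p q : pred T) (s : seq T) :
  (forall y, y \in s -> p y -> q y) -> (count p s <= count q s)%N.
Proof.
elim: s => [|z s IH] H //=; apply: leq_add.
  by case: (boolP (p z)) => // pz; rewrite (H z (mem_head _ _) pz).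
by apply: IH => y yin; apply: H; rewrite in_cons yin orbT.
Qed.

Lemma count_lt (T : eqType) (p q : pred T) (s : seq T) :
  (forall y, y \in s -> p y -> q y) -> (exists y, [/\ y \in s, q y & ~~ p y]) ->
  (count p s < count q s)%N.
Proof.
elim: s => [|z s IH] Hpq [y [yin qy npy]] //=.
have Hpq' : forall y, y \in s -> p y -> q y.
  by move=> y' yin'; apply: Hpq; rewrite in_cons yin' orbT.
have Hle : (count p s <= count q s)%N.
  exact: count_le_in.
move: yin; rewrite in_cons => /orP [/eqP Ey|yin].
  subst z; rewrite qy (negbTE npy) /=; by rewrite add0n add1n ltnS.
have := IH Hpq' (ex_intro _ y (And3 yin qy npy)).
case: (boolP (p z)) => pz.
  by rewrite (Hpq z (mem_head _ _) pz) /= !add1n ltnS.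
by case: (q z) => /=; rewrite ?add0n ?add1n // => H; apply: ltn_trans H _.
Qed.

Lemma seq_min (T : eqType) (s : seq T) (f : T -> rat) y0 :
  y0 \in s -> exists2 y, y \in s & forall z, z \in s -> f y <= f z.
Proof.
elim: s y0 => [|a s IH] y0 //.
case: s IH => [|b s] IH.
  move=> _; exists a; rewrite ?mem_head // => z; rewrite in_cons => /orP [/eqP ->|] //.
have [y yin Hy] := IH b (mem_head _ _).
move=> _; case: (lerP (f a) (f y)) => Ha.
  exists a; first exact: mem_head.
  move=> z; rewrite in_cons => /orP [/eqP -> //|zin]; exact: le_trans Ha (Hy z zin).
exists y; first by rewrite in_cons yin orbT.
move=> z; rewrite in_cons => /orP [/eqP ->|zin]; [exact: ltW | exact: Hy].
Qed.

Section MW.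
Variable n : nat.
Variable G : seq 'cV[rat]_n.
Definition Dm (u : 'cV[rat]_n) := forall y, y \in G -> 0 <= dot u y.
Definition NT (u : 'cV[rat]_n) := count (fun y => dot u y != 0) G.
Definition Lsp (u w : 'cV[rat]_n) := forall y, y \in G -> dot u y = 0 -> dot w y = 0.
Definition extr (u : 'cV[rat]_n) :=
  [/\ u != 0, Dm u & forall a b, Dm a -> Dm b -> a + b = u ->
        exists c, 0 <= c /\ a = c *: u].

Lemma hit u w y1 : Dm u -> Lsp u w -> y1 \in G -> dot w y1 < 0 ->
  exists t, [/\ 0 < t, Dm (u + t *: w) & (NT (u + t *: w) < NT u)%N].
Proof.
move=> Du Lw y1G y1n.
pose S := filter (fun y => dot w y < 0) G.
pose f y := dot u y / (- dot w y).
have y1S : y1 \in S by rewrite mem_filter y1n.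
have [ys ysS Hmin] := seq_min f y1S.
move: ysS; rewrite mem_filter => /andP [ysn ysG].
have dus : 0 < dot u ys.
  rewrite lt_def Du // andbT; apply/eqP => H.
  by move: ysn; rewrite (Lw _ ysG H) ltxx.
have fys : f ys * (- dot w ys) = dot u ys by rewrite /f; field; rewrite ?oppr_eq0 neq0_lt.
have tpos : 0 < f ys by rewrite /f divr_gt0 // oppr_gt0.
exists (f ys); split => //.
  move=> y yG; rewrite dotDl dotZl.
  have duy := Du y yG.
  case: (ltrP (dot w y) 0) => wy; last by nra.
  have yS : y \in S by rewrite mem_filter wy.
  have := Hmin y yS.
  have fy : f y * (- dot w y) = dot u y by rewrite /f; field; rewrite ?oppr_eq0 neq0_lt.
  nra.
apply: count_lt.
  move=> y yG; apply: contraNN => /eqP H.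
  by rewrite dotDl dotZl (Lw y yG H) H mulr0 addr0.
exists ys; split => //; first by rewrite gt_eqF.
rewrite dotDl dotZl negbK; apply/eqP; nra.
Qed.


Lemma exists_y0 (pointed : forall u, Dm u -> Dm (- u) -> u = 0) u :
  Dm u -> u != 0 -> exists2 y0, y0 \in G & dot u y0 != 0.
Proof.
move=> Du un0.
case: (boolP (has (fun y => dot u y != 0) G)) => [/hasP [y yG H]|/hasPn H].
  by exists y.
have Du' : Dm (- u).
  move=> y yG; rewrite dotNl oppr_ge0.
  by have := H y yG; rewrite negbK => /eqP ->.
by move: un0; rewrite (pointed _ Du Du') eqxx.
Qed.

Lemma MW (pointed : forall u, Dm u -> Dm (- u) -> u = 0) x :
  (forall u, extr u -> 0 <= dot u x) -> forall u, Dm u -> 0 <= dot u x.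
Proof.
move=> Hext u.
move: {2}(NT u) (leqnn (NT u)) => k; elim: k u => [|k IH] u Hk Du;
  (case: (eqVneq u 0) => [->|un0]; first by rewrite dot0l);
  have [y0 y0G du0] := exists_y0 pointed Du un0.
  suff : (0 < NT u)%N by rewrite ltnNge Hk.
  by rewrite -has_count; apply/hasP; exists y0.
have du0p : 0 < dot u y0 by rewrite lt_def du0 Du.
have IH' : forall a, (NT a < NT u)%N -> Dm a -> 0 <= dot a x.
  by move=> a Ha Da; apply: IH => //; rewrite -ltnS; apply: leq_trans Ha Hk.
have NTlt : forall w', Lsp u w' -> dot w' y0 = 0 -> (NT w' < NT u)%N.
  move=> w' Lw' w'0; apply: count_lt.
    by move=> y yG; apply: contraNN => /eqP H; rewrite (Lw' y yG H).
  by exists y0; split => //; rewrite w'0 eqxx.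
case: (Classical_Prop.classic (exists w1, Lsp u w1 /\ forall c, w1 <> c *: u)).
  case=> w1 [Lw1 Hw1].
  pose w := dot u y0 *: w1 - dot w1 y0 *: u.
  have Lw : Lsp u w.
    by move=> y yG H; rewrite /w dotBl !dotZl H (Lw1 y yG H) !mulr0 subr0.
  have wy0 : dot w y0 = 0 by rewrite /w dotBl !dotZl mulrC subrr.
  have Lmw : Lsp u (- w) by move=> y yG H; rewrite dotNl (Lw y yG H) oppr0.
  have mwy0 : dot (- w) y0 = 0 by rewrite dotNl wy0 oppr0.
  have wn0 : w != 0.
    apply/eqP => w0; apply: (Hw1 (dot w1 y0 / dot u y0)).
    apply/matrixP => i j; have := congr1 (fun M : 'cV[rat]_n => M i j) w0.
    rewrite /w !mxE => H.
    have -> : w1 i j = (dot u y0 * w1 i j - dot w1 y0 * u i j) / dot u y0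
                        + dot w1 y0 / dot u y0 * u i j by field.
    by rewrite H mul0r add0r.
  clearbody w.
  case: (boolP (has (fun y => dot w y < 0) G)) => [/hasP [y1 y1G y1n] | /hasPn Hp];
  case: (boolP (has (fun y => dot (- w) y < 0) G)) => [/hasP [y2 y2G y2n] | /hasPn Hm].
  - have [t1 [t1p Da NTa]] := hit Du Lw y1G y1n.
    have [t2 [t2p Db NTb]] := hit Du Lmw y2G y2n.
    have := IH' _ NTa Da; have := IH' _ NTb Db.
    rewrite !dotDl !dotZl dotNl; nra.
  - have [t1 [t1p Da NTa]] := hit Du Lw y1G y1n.
    have Dmw : Dm (- w) by move=> y yG; have := Hm y yG; rewrite -leNgt.
    have := IH' _ NTa Da; have := IH' _ (NTlt _ Lmw mwy0) Dmw.
    rewrite !dotDl !dotZl dotNl; nra.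
  - have [t2 [t2p Db NTb]] := hit Du Lmw y2G y2n.
    have Dw : Dm w by move=> y yG; have := Hp y yG; rewrite -leNgt.
    have := IH' _ NTb Db; have H2 := IH' _ (NTlt _ Lw wy0) Dw.
    have := mulr_ge0 (ltW t2p) H2.
    rewrite !dotDl !dotZl dotNl;  nra.
  - have Dmw : Dm (- w) by move=> y yG; have := Hm y yG; rewrite -leNgt.
    have Dw : Dm w by move=> y yG; have := Hp y yG; rewrite -leNgt.
    by move: wn0; rewrite (pointed _ Dw Dmw) eqxx.
move=> Hno; apply: Hext; split => // a b Da Db Eab.
have La : Lsp u a.
  move=> y yG H; have := Da y yG; have := Db y yG.
  by rewrite -Eab dotDl in H; lra.
have [c Ec] : exists c, a = c *: u.
  apply: Classical_Prop.NNPP => Hn; apply: Hno; exists a; split => // c Ec.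
  by apply: Hn; exists c.
exists c; split => //.
have := Da y0 y0G; rewrite Ec dotZl; nra.
Qed.
End MW.


Lemma dpair_dot n (u : 'cV[rat]_n) x : dpair u x = dot u (toQ x).
Proof. by apply: eq_bigr => k _; rewrite mxE. Qed.

Lemma toQD n (a b : 'cV[int]_n) : toQ (a + b) = toQ a + toQ b.
Proof. by apply/matrixP => i j; rewrite !mxE intrD. Qed.
Lemma toQN n (a : 'cV[int]_n) : toQ (- a) = - toQ a.
Proof. by apply/matrixP => i j; rewrite !mxE intrN. Qed.
Lemma toQB n (a b : 'cV[int]_n) : toQ (a - b) = toQ a - toQ b.
Proof. by rewrite toQD toQN. Qed.
Lemma toQ0 n : toQ (0 : 'cV[int]_n) = 0.
Proof. by apply/matrixP => i j; rewrite !mxE. Qed.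
Lemma toQMn n (a : 'cV[int]_n) m : toQ (a *+ m) = toQ a *+ m.
Proof. by apply/matrixP => i j; rewrite !(mxE, mulmxnE) rmorphMn. Qed.
Lemma toQ_inj n : injective (@toQ n).
Proof.
move=> a b H; apply/matrixP => i j.
by have := congr1 (fun M : 'cV[rat]_n => M i j) H; rewrite !mxE => /intr_inj.
Qed.
Lemma toQE n (a : 'cV[int]_n) i j : toQ a i j = (a i j)%:~R.
Proof. by rewrite mxE. Qed.

Lemma in_dual0 n (P : 'cV[int]_n -> Prop) : in_dual P 0.
Proof. by move=> x _; rewrite dpair_dot dot0l. Qed.
Lemma in_dualD n (P : 'cV[int]_n -> Prop) a b :
  in_dual P a -> in_dual P b -> in_dual P (a + b).
Proof.
by move=> Ha Hb x Px; have := Ha x Px; have := Hb x Px; rewrite !dpair_dot dotDl; lra.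
Qed.
Lemma in_dualZ n (P : 'cV[int]_n -> Prop) c a :
  0 <= c -> in_dual P a -> in_dual P (c *: a).
Proof.
by move=> c0 Ha x Px; have := Ha x Px; rewrite !dpair_dot dotZl => H; apply: mulr_ge0.
Qed.

Lemma incone_dual n (P : 'cV[int]_n -> Prop) ws x :
  (forall y, y \in ws -> in_dual P y) -> incone ws x -> in_dual P x.
Proof.
elim: ws x => [|w ws IH] x Hw /=; first by move=> ->; exact: in_dual0.
case=> c c0 Hc; have -> : x = (x - c *: w) + c *: w by rewrite subrK.
apply: in_dualD; last by apply: in_dualZ => //; apply: Hw; rewrite mem_head.
by apply: IH => // y yin; apply: Hw; rewrite in_cons yin orbT.
Qed.

Lemma cone_extr n (P : 'cV[int]_n -> Prop) ws u :
  (forall y, y \in ws -> in_dual P y) -> extremal_ray P u -> incone ws u ->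
  exists2 w, w \in ws & exists2 c, 0 < c & u = c *: w.
Proof.
move=> Hw [un0 Du Hext]; elim: ws Hw => [|w ws IH] Hw /=.
  by move=> u0; move: un0; rewrite u0 eqxx.
case=> c c0 Hc.
have Dw : in_dual P w by apply: Hw; rewrite mem_head.
have Hws : forall y, y \in ws -> in_dual P y.
  by move=> y yin; apply: Hw; rewrite in_cons yin orbT.
have [c' [c'0 Ec']] := Hext (c *: w) (u - c *: w) (in_dualZ c0 Dw)
   (incone_dual Hws Hc) ltac:(by rewrite addrC subrK).
case: (eqVneq c' 0) => [c'z|c'n0].
  have : c *: w = 0 by rewrite Ec' c'z scale0r.
  move=> H; have [w' w'in Hw'] := IH Hws ltac:(by move: Hc; rewrite H subr0).
  by exists w' => //; rewrite in_cons w'in orbT.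
exists w; first exact: mem_head.
have cn0 : c != 0.
  apply/eqP => cz; move: Ec'; rewrite cz scale0r => /esym/eqP.
  by rewrite scaler_eq0 (negbTE c'n0) (negbTE un0).
exists (c / c'); first by rewrite divr_gt0 // lt_def ?cn0 ?c'n0.
by rewrite mulrC -scalerA Ec' scalerA mulVf ?scale1r.
Qed.

Lemma denq_nat (c : rat) : ((absz (denq c))%:R : rat) = (denq c)%:~R.
Proof. by have H : ((absz (denq c)) : int) = denq c := gtz0_abs (denq_gt0 c); rewrite -H. Qed.
Lemma numq_nat (c : rat) : 0 <= c -> ((absz (numq c))%:R : rat) = (numq c)%:~R.
Proof.
move=> c0; have : 0 <= numq c by rewrite numq_ge0.
move=> H; have H' : ((absz (numq c)) : int) = numq c := gez0_abs H; by rewrite -H'.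
Qed.
Lemma qnum_den (c : rat) : c * (absz (denq c))%:R = (numq c)%:~R.
Proof.
rewrite denq_nat; rewrite -{1}(divq_num_den c); field.
by rewrite intr_eq0 denq_eq0.
Qed.

Lemma intrMn' (z : int) (M : nat) : (z *+ M)%:~R = (z%:~R *+ M : rat).
Proof. by elim: M => [|M IH]; rewrite ?mulr0n // !mulrS intrD IH. Qed.

Lemma rat_int_seq (s : seq rat) : exists2 M : nat, (0 < M)%N &
  forall r, r \in s -> exists z : int, r *+ M = z%:~R.
Proof.
elim: s => [|r s [M M0 IH]]; first by exists 1%N.
exists (M * absz (denq r))%N; first by rewrite muln_gt0 M0 absz_gt0 denq_neq0.
move=> r'; rewrite in_cons => /orP [/eqP ->|r'in].
  exists (numq r *+ M); rewrite intrMn' -(qnum_den r) (mulr_natr r).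
  by rewrite -mulrnA mulnC.
have [z Hz] := IH r' r'in; exists (z *+ absz (denq r)).
by rewrite mulrnA Hz intrMn'.
Qed.

Lemma rat_int_vec n (x : 'cV[rat]_n) : exists2 M : nat, (0 < M)%N &
  exists z : 'cV[int]_n, toQ z = x *+ M.
Proof.
have [M M0 H] := rat_int_seq [seq x k 0 | k <- enum 'I_n].
exists M => //; exists (\col_k Num.floor (x k 0 *+ M)).
apply/matrixP => i j; rewrite (ord1 j) !(mxE, mulmxnE).
have [z Hz] := H (x i 0) (map_f _ (mem_enum _ i)).
by rewrite Hz intrKfloor.
Qed.

Lemma PMn n (P : 'cV[int]_n -> Prop) :
  P 0 -> (forall a b, P a -> P b -> P (a + b)) -> forall g k, P g -> P (g *+ k).
Proof. by move=> P0 PD g k Pg; elim: k => [|k IH]; rewrite ?mulr0n // mulrS; apply: PD. Qed.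

Lemma arith1 (X c G : rat) (M q p : nat) : p%:R = c * q%:R ->
  (X - c * G) *+ M *+ q + G *+ (M * p) = X *+ (M * q).
Proof.
move=> Hp.
rewrite -(mulr_natr ((X - c * G) *+ M) q) -(mulr_natr (X - c * G) M).
rewrite -(mulr_natr G (M * p)) -(mulr_natr X (M * q)) !natrM Hp; ring.
Qed.

Lemma incone_int n (P : 'cV[int]_n -> Prop) :
  P 0 -> (forall a b, P a -> P b -> P (a + b)) ->
  forall gs, (forall y, y \in gs -> P y) ->
  forall x, incone (map (@toQ n) gs) x ->
  exists2 M : nat, (0 < M)%N & exists2 z, P z & toQ z = x *+ M.
Proof.
move=> P0 PD; elim=> [|g gs IH] Hg x /=.
  by move=> ->; exists 1%N => //; exists 0 => //; rewrite toQ0 mul0rn.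
case=> c c0 Hc.
have [M M0 [z Pz Hz]] := IH (fun y yin => Hg y (mem_behead (s := g :: gs) yin)) _ Hc.
pose q := absz (denq c); pose p := absz (numq c).
exists (M * q)%N; first by rewrite muln_gt0 M0 absz_gt0 denq_neq0.
exists (z *+ q + g *+ (M * p)).
  apply PD; apply: (PMn P0 PD); [exact: Pz | by apply: Hg; rewrite mem_head].
have Hp : (p%:R : rat) = c * q%:R by rewrite qnum_den numq_nat.
rewrite toQD !toQMn Hz; apply/matrixP => i j; rewrite !(mxE, mulmxnE).
exact: arith1.
Qed.


Definition ip n (v a : 'cV[int]_n) : int := \sum_l v l 0 * a l 0.

Lemma dpair_toQ n (v a : 'cV[int]_n) : dpair (toQ v) a = (ip v a)%:~R.
Proof. by rewrite /dpair /ip rmorph_sum; apply: eq_bigr => l _; rewrite toQE rmorphM. Qed.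

Lemma ipD n (v a b : 'cV[int]_n) : ip v (a + b) = ip v a + ip v b.
Proof. by rewrite /ip -big_split; apply: eq_bigr => l _; rewrite mxE mulrDr. Qed.
Lemma ipN n (v a : 'cV[int]_n) : ip v (- a) = - ip v a.
Proof. by rewrite /ip -sumrN; apply: eq_bigr => l _; rewrite mxE mulrN. Qed.
Lemma ipB n (v a b : 'cV[int]_n) : ip v (a - b) = ip v a - ip v b.
Proof. by rewrite ipD ipN. Qed.
Lemma ip0 n (v : 'cV[int]_n) : ip v 0 = 0.
Proof. by rewrite /ip big1 // => l _; rewrite mxE mulr0. Qed.

Lemma dot_delta n (u : 'cV[rat]_n) k : dot u (toQ (delta_mx k 0)) = u k 0.
Proof.
rewrite /dot (bigD1 k) //= big1 ?addr0.
  by rewrite !mxE !eqxx /= mulr1.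
by move=> l lk; rewrite !mxE (negbTE lk) /= mulr0.
Qed.

Lemma canon_mapE n d (v : 'I_d -> 'cV[int]_n) p k :
  canon_map v p k 0 = absz (ip (v k) p).
Proof. by rewrite mxE. Qed.

Lemma dpairD n (u : 'cV[rat]_n) a b : dpair u (a + b) = dpair u a + dpair u b.
Proof. by rewrite !dpair_dot toQD dotDr. Qed.
Lemma dpair0 n (u : 'cV[rat]_n) : dpair u 0 = 0.
Proof. by rewrite dpair_dot toQ0 dot0r. Qed.
Lemma dpairMn n (u : 'cV[rat]_n) a m : dpair u (a *+ m) = dpair u a *+ m.
Proof. by elim: m => [|m IH]; rewrite ?mulr0n ?dpair0 // !mulrS dpairD IH. Qed.
Lemma dpair_sum n (u : 'cV[rat]_n) m (F : 'I_m -> 'cV[int]_n) :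
  dpair u (\sum_k F k) = \sum_k dpair u (F k).
Proof. exact: (big_morph (dpair u) (dpairD u) (dpair0 u)). Qed.

Lemma absz_add_ge0 (x y : int) : 0 <= x -> 0 <= y -> absz (x + y) = (absz x + absz y)%N.
Proof. by case: x => // x; case: y => // y _ _; rewrite -PoszD. Qed.

Lemma absz_le_ge0 (x y : int) : 0 <= x -> 0 <= y -> (absz x <= absz y)%N -> x <= y.
Proof. by case: x => // x; case: y => // y _ _; rewrite lez_nat. Qed.

Section Main.
Variables (n : nat) (P : 'cV[int]_n -> Prop).
Hypothesis HP : toric_sharp_saturated P.

Lemma P0 : P 0. Proof. by case: HP => [[]]. Qed.
Lemma PD a b : P a -> P b -> P (a + b). Proof. by case: HP => [[_ H]] *; apply: H. Qed.
Lemma Psat x m : (0 < m)%N -> P (x *+ m) -> P x. Proof. by case: HP => _ _ H *; apply: (H x m). Qed.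
Lemma Pgp x : exists a b, [/\ P a, P b & x = a - b]. Proof. by case: HP => _ _ _ _ H. Qed.

Lemma in_dual_zero (u : 'cV[rat]_n) :
  (forall p, P p -> dpair u p = 0) -> u = 0.
Proof.
move=> H; apply/matrixP => k j; rewrite (ord1 j) [RHS]mxE -dot_delta.
have [a [b [Pa Pb ->]]] := Pgp (delta_mx k 0).
by rewrite toQB dotBr -!dpair_dot !H // subrr.
Qed.

Lemma pointed (u : 'cV[rat]_n) : in_dual P u -> in_dual P (- u) -> u = 0.
Proof.
move=> Du Dmu; apply: in_dual_zero => p Pp; apply/eqP; rewrite eq_le Du // andbT.
by have := Dmu p Pp; rewrite !dpair_dot dotNl oppr_ge0.
Qed.

Lemma dual_iff m (g : 'I_m -> 'cV[int]_n) :
  (forall k, P (g k)) ->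
  (forall x, P x -> exists c : 'I_m -> nat, x = \sum_(k < m) g k *+ c k) ->
  forall u, in_dual P u <-> Dm (map (@toQ n) (map g (enum 'I_m))) u.
Proof.
move=> Pg Hgen u; split.
  move=> Du y /mapP [z /mapP [k _ ->] ->]; rewrite -dpair_dot; exact: Du.
move=> Du x /Hgen [c ->]; rewrite dpair_sum sumr_ge0 // => k _.
rewrite dpairMn mulrn_wge0 // dpair_dot; apply: Du.
by apply: map_f; apply: map_f; rewrite mem_enum.
Qed.

Lemma ip_ge0 d (v : 'I_d -> 'cV[int]_n) (Hv : forall k, first_lattice_point P (v k)) k p :
  P p -> 0 <= ip (v k) p.
Proof.
move=> Pp; have [[_ Dv _] _] := Hv k.
by have := Dv p Pp; rewrite dpair_toQ ler0z.
Qed.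

Lemma part1 d (v : 'I_d -> 'cV[int]_n)
    (Hv : forall k, first_lattice_point P (v k))
    (Hall : forall u, extremal_ray P u ->
              exists k (c : rat), 0 < c /\ u = c *: toQ (v k)) :
  monoid_mor P (canon_map v) /\ exact_mor P (canon_map v).
Proof.
split; first split.
- by apply/matrixP => k j; rewrite (ord1 j) canon_mapE ip0 mxE.
- move=> a b Pa Pb; apply/matrixP => k j; rewrite (ord1 j) [in RHS]mxE !canon_mapE ipD.
  by rewrite absz_add_ge0 // (ip_ge0 Hv).
move=> a b Pa Pb Hle.
have Hip : forall k, 0 <= ip (v k) (a - b).
  move=> k; rewrite ipB subr_ge0; apply: absz_le_ge0; rewrite ?(ip_ge0 Hv) //.
  by have := Hle k; rewrite !canon_mapE.
case: HP => [[_ _] [m [g [Pg Hgen]]] _ _ _].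
pose G := map (@toQ n) (map g (enum 'I_m)).
have DI := dual_iff Pg Hgen.
pose x := toQ (a - b).
have pt : forall u, Dm G u -> Dm G (- u) -> u = 0.
  by move=> u /DI Du /DI Dmu; apply: pointed.
have Hext : forall u, extr G u -> 0 <= dot u x.
  move=> u [un0 /DI Du Hu].
  have : extremal_ray P u.
    by split => // a' b' /DI Da /DI Db; apply: Hu.
  move=> /Hall [k [c [c0 ->]]].
  rewrite dotZl /x -dpair_dot dpair_toQ; apply: mulr_ge0; [exact: ltW | rewrite ler0z; exact: Hip].
have MWx := MW pt Hext.
have Hin : incone G x.
  apply: Classical_Prop.NNPP => Hn; have [u [Hu Hux]] := farkas Hn.
  by have := MWx u Hu; lra.
have Hgs : forall y, y \in map g (enum 'I_m) -> P y.
  by move=> y /mapP [k _ ->].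
have [M M0 [z Pz Hz]] := incone_int P0 PD Hgs Hin.
apply: (Psat M0); suff <- : z = (a - b) *+ M by [].
by apply: toQ_inj; rewrite Hz toQMn.
Qed.
End Main.


Lemma fchoice (A B : Type) (R : A -> B -> Prop) :
  (forall x, exists y, R x y) -> exists f, forall x, R x (f x).
Proof.
move=> H; exists (fun x => proj1_sig (ClassicalEpsilon.constructive_indefinite_description _ (H x))).
by move=> x; case: (ClassicalEpsilon.constructive_indefinite_description _ (H x)).
Qed.

Lemma toQMz n (v : 'cV[int]_n) (z : int) : toQ (v *~ z) = z%:~R *: toQ v.
Proof. by rewrite -scaler_int; apply/matrixP => i j; rewrite !mxE rmorphM intz. Qed.


Lemma same_ray n (P : 'cV[int]_n -> Prop) v v' c :
  first_lattice_point P v -> first_lattice_point P v' -> 0 < c ->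
  toQ v = c *: toQ v' -> v = v'.
Proof.
move=> [_ Hv] [_ Hv'] c0 E.
have c1 : 1 <= c by apply: Hv' => //; exists v.
have c1' : 1 <= c^-1.
  apply: Hv; first by rewrite invr_gt0.
  by exists v'; rewrite E scalerA mulVf ?scale1r // gt_eqF.
have c_1 : c = 1.
  apply/eqP; rewrite eq_le c1 andbT.
  by move: c1'; rewrite invf_ge1.
by apply: toQ_inj; rewrite E c_1 scale1r.
Qed.

Lemma int_mult n (P : 'cV[int]_n -> Prop) v c :
  first_lattice_point P v -> 0 < c -> (exists w, toQ w = c *: toQ v) ->
  exists N : nat, c = N%:R.
Proof.
move=> [_ Hv] c0 [w Hw].
pose z := Num.floor c; pose f := c - z%:~R.
have f0 : 0 <= f by rewrite /f subr_ge0 floor_le.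
have f1 : f < 1.
  by have := floorD1_gt c; rewrite -/z intrD /f; lra.
case: (eqVneq f 0) => fz.
  have z0 : 0 <= z by rewrite /z floor_ge0 ltW.
  have H' : (absz z : int) = z := gez0_abs z0.
  exists (absz z); move: fz; rewrite /f => /eqP; rewrite subr_eq0 => /eqP ->.
  by rewrite -[in LHS]H'.
have : 1 <= f.
  apply: Hv; first by rewrite lt_def fz f0.
  by exists (w - v *~ z); rewrite toQB toQMz Hw /f scalerBl.
by move=> H; move: f1; rewrite ltNge H.
Qed.

Lemma vec_decomp n (x : 'cV[int]_n) : x = \sum_k x k 0 *: delta_mx k 0.
Proof.
apply/matrixP => i j; rewrite (ord1 j) summxE (bigD1 i) //= big1 ?addr0.
  by rewrite !mxE !eqxx mulr1.
by move=> k ki; rewrite !mxE eq_sym (negbTE ki) mulr0.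
Qed.

Lemma addlin n (f : 'cV[int]_n -> int) :
  (forall x y, f (x + y) = f x + f y) ->
  forall x, f x = ip (\col_k f (delta_mx k 0)) x.
Proof.
move=> fD.
have f0 : f 0 = 0 by have := fD 0 0; rewrite addr0; lra.
have fN : forall x, f (- x) = - f x.
  by move=> x; have := fD x (- x); rewrite subrr f0; lra.
have fMn : forall x k, f (x *+ k) = f x *+ k.
  by move=> x; elim=> [|k IH]; rewrite ?mulr0n // !mulrS fD IH.
have fMz : forall x (z : int), f (z *: x) = f x * z.
  move=> x z; rewrite -[z in z *: x]intz scaler_int.
  case: z => k.
    by change (f (x *+ k) = f x * k%:Z); rewrite fMn -mulr_natr natz.
  by rewrite NegzE mulrNz fN; change (- f (x *+ k.+1) = f x * - (k.+1)%:Z);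
    rewrite fMn mulrN -mulr_natr natz.
move=> x; rewrite {1}(vec_decomp x).
rewrite (big_morph f fD f0) /ip; apply: eq_bigr => k _.
by rewrite fMz mxE.
Qed.

Lemma natvec_decomp d (y : 'cV[nat]_d) : y = \sum_k delta_mx k 0 *+ y k 0.
Proof.
apply/matrixP => i j; rewrite (ord1 j) summxE (bigD1 i) //= big1 ?addr0.
  by rewrite mulmxnE !mxE !eqxx /= mulr1n natn.
by move=> k ki; rewrite mulmxnE !mxE eq_sym (negbTE ki) mul0rn.
Qed.

Lemma free_lin d e (j : 'cV[nat]_d -> 'cV[nat]_e) : free_mor j ->
  forall y m, j y m 0 = \sum_k j (delta_mx k 0) m 0 * y k 0.
Proof.
move=> [j0 jD] y m.
have jMn : forall x c, j (x *+ c) = j x *+ c.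
  by move=> x; elim=> [|c IH]; rewrite ?mulr0n // !mulrS jD IH.
rewrite {1}(natvec_decomp y) (big_morph j jD j0) summxE; apply: eq_bigr => k _.
by rewrite jMn mulmxnE -mulr_natr natn.
Qed.


Section Part2.
Variables (n : nat) (P : 'cV[int]_n -> Prop).
Hypothesis HP : toric_sharp_saturated P.
Variables (d : nat) (v : 'I_d -> 'cV[int]_n).
Hypothesis Hinj : injective v.
Hypothesis Hv : forall k, first_lattice_point P (v k).
Hypothesis Hall : forall u, extremal_ray P u ->
              exists k (c : rat), 0 < c /\ u = c *: toQ (v k).
Variable i' : 'cV[int]_n -> 'cV[nat]_d.
Hypothesis Hmon : monoid_mor P i'.
Hypothesis Hex : exact_mor P i'.

Lemma i'D a b m : P a -> P b -> i' (a + b) m 0 = (i' a m ord0 + i' b m ord0)%N.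
Proof. by move=> Pa Pb; case: Hmon => _ H; rewrite H // mxE. Qed.

Lemma i'0 m : i' 0 m 0 = 0%N :> nat.
Proof. by case: Hmon => -> _; rewrite mxE. Qed.

Lemma exists_pab : exists pab : 'cV[int]_n -> 'cV[int]_n * 'cV[int]_n,
  forall x, [/\ P (pab x).1, P (pab x).2 & x = (pab x).1 - (pab x).2].
Proof.
apply: (@fchoice _ _ (fun x (ab : 'cV[int]_n * 'cV[int]_n) => [/\ P ab.1, P ab.2 & x = ab.1 - ab.2])) => x; have [a [b [Pa Pb E]]] := Pgp HP x.
by exists (a, b).
Qed.


Lemma dotMnr m (u x : 'cV[rat]_m) M : dot u (x *+ M) = dot u x *+ M.
Proof. by rewrite -scaler_nat dotZr mulr_natl. Qed.

Lemma part2 : exists j : 'cV[nat]_d -> 'cV[nat]_d,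
      [/\ free_mor j,
          (forall p, P p -> i' p = j (canon_map v p)) &
          forall j' : 'cV[nat]_d -> 'cV[nat]_d, free_mor j' ->
            (forall p, P p -> i' p = j' (canon_map v p)) -> j' =1 j].
Proof.
have [pab Hpab] := exists_pab.
pose wf (m : 'I_d) x : int := (i' (pab x).1 m 0)%:Z - (i' (pab x).2 m 0)%:Z.
have wf_def : forall m a b, P a -> P b -> wf m (a - b) = (i' a m 0)%:Z - (i' b m 0)%:Z.
  move=> m a b Pa Pb; rewrite /wf.
  move: (Hpab (a - b)); set x1 := (pab _).1; set x2 := (pab _).2; case=> P1 P2 E.
  have E2 : x1 + b = a + x2.
    have -> : x1 = a - b + x2 by rewrite E subrK.
    by rewrite addrAC subrK.
  have := congr1 (fun M : 'cV[nat]_d => (M m 0 : int)) (congr1 i' E2) => /=.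
  rewrite !i'D // !PoszD; lra.
have wfD : forall m x y, wf m (x + y) = wf m x + wf m y.
  move=> m x y; case: (Hpab x) => Px1 Px2 Ex; case: (Hpab y) => Py1 Py2 Ey.
  rewrite [in LHS]Ex [in LHS]Ey.
  have -> : (pab x).1 - (pab x).2 + ((pab y).1 - (pab y).2) =
            ((pab x).1 + (pab y).1) - ((pab x).2 + (pab y).2) by rewrite opprD addrACA.
  rewrite (wf_def m _ _ (PD HP Px1 Py1) (PD HP Px2 Py2)) !i'D // !PoszD /wf; lra.
pose Wi m := \col_k wf m (delta_mx k 0).
have wf_ip : forall m x, wf m x = ip (Wi m) x := fun m => addlin (wfD m).
pose W m := toQ (Wi m).
have wfW : forall m x, (wf m x)%:~R = dot (W m) (toQ x).
  by move=> m x; rewrite wf_ip -dpair_dot dpair_toQ.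
have i'wf : forall m p, P p -> (i' p m 0)%:Z = wf m p.
  by move=> m p Pp; rewrite -[p in wf m p]subr0 (wf_def m _ _ Pp (P0 HP)) i'0 subr0.
have DW : forall m, in_dual P (W m).
  by move=> m p Pp; rewrite dpair_dot -wfW -i'wf // ler0z.
have Pwf : forall y, (forall m, 0 <= wf m y) -> P y.
  move=> y H; case: (Hpab y) => P1 P2 E; rewrite E; apply: Hex => // m.
  by have := H m; rewrite /wf subr_ge0 lez_nat.
pose Ws := map W (enum 'I_d).
have HWs : forall y, y \in Ws -> in_dual P y by move=> y /mapP [m _ ->].
have cone : forall u, in_dual P u -> incone Ws u.
  move=> u Du; apply: Classical_Prop.NNPP => Hn; have [x [Hx Hux]] := farkas Hn.
  have [M M0 [z Hz]] := rat_int_vec x.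
  have Pz : P z.
    apply: Pwf => m; rewrite -(ler0z rat) wfW Hz dotMnr mulrn_wge0 // dotC.
    by apply: Hx; apply: map_f; rewrite mem_enum.
  have := Du z Pz; rewrite dpair_dot Hz dotMnr -mulr_natr.
  have : (0 : rat) < M%:R by rewrite ltr0n.
  by rewrite dotC; nra.
have Hsig : forall k, exists mc : 'I_d * rat, 0 < mc.2 /\ toQ (v k) = mc.2 *: W mc.1.
  move=> k; have [ext1 _] := Hv k; have [_ Dk _] := ext1.
  have [w win [c c0 E]] := cone_extr HWs ext1 (cone _ Dk).
  by move: win => /mapP [m _ Ew]; exists (m, c); rewrite E Ew.
have [sc Hsc] := @fchoice _ _ (fun k (mc : 'I_d * rat) =>
   0 < mc.2 /\ toQ (v k) = mc.2 *: W mc.1) Hsig.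
pose sg k := (sc k).1; pose cs k := (sc k).2.
have sginj : injective sg.
  move=> k k' E; apply: Hinj.
  have [c0 Ek] := Hsc k; have [c0' Ek'] := Hsc k'.
  apply: (same_ray (Hv k) (Hv k') (c := cs k / cs k')).
    by rewrite divr_gt0.
  rewrite Ek Ek' -/(sg k) -/(sg k') -/(cs k) -/(cs k') E scalerA.
  by rewrite mulrAC -mulrA mulfV ?mulr1 // gt_eqF.
pose tau := invF sginj.
have sgtau : forall m, sg (tau m) = m := f_invF sginj.
have HN : forall m, exists N : nat, W m = N%:R *: toQ (v (tau m)) /\ (0 < N)%N.
  move=> m; have [c0 E] := Hsc (tau m).
  rewrite -/(sg (tau m)) -/(cs (tau m)) sgtau in E.
  have Wm : W m = (cs (tau m))^-1 *: toQ (v (tau m)).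
    by rewrite E scalerA mulVf ?scale1r // gt_eqF.
  have [N EN] := int_mult (Hv (tau m)) (c := (cs (tau m))^-1)
     ltac:(by rewrite invr_gt0) (ex_intro _ (Wi m) Wm).
  exists N; split; first by rewrite Wm EN.
  by rewrite -(ltr0n rat) -EN invr_gt0.
have [N HNm] := @fchoice _ _ (fun m N => W m = N%:R *: toQ (v (tau m)) /\ (0 < N)%N) HN.
have wfN : forall m x, wf m x = (N m)%:Z * ip (v (tau m)) x.
  move=> m x; apply: (@intr_inj rat).
  by rewrite wfW (proj1 (HNm m)) dotZl -dpair_dot dpair_toQ rmorphM.
have ipv0 : forall k p, P p -> 0 <= ip (v k) p := fun k p Pp => ip_ge0 Hv k Pp.
pose j (y : 'cV[nat]_d) : 'cV[nat]_d := \col_m (N m * y (tau m) ord0)%N.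
have jE : forall y m, j y m 0 = (N m * y (tau m) ord0)%N by move=> y m; rewrite mxE.
exists j; split.
- split.
    by apply/matrixP => m i; rewrite (ord1 i) jE !mxE muln0.
  by move=> x y; apply/matrixP => m i; rewrite (ord1 i) [in RHS]mxE !jE mxE mulnDr.
- move=> p Pp; apply/matrixP => m i; rewrite (ord1 i) jE canon_mapE.
  have := i'wf m p Pp; rewrite wfN.
  have H' : (absz (ip (v (tau m)) p) : int) = ip (v (tau m)) p := gez0_abs (ipv0 _ _ Pp).
  by rewrite -H' -PoszM => -[].
move=> j' Hj' H' y; apply/matrixP => m i; rewrite (ord1 i) jE free_lin //.
pose u k := j' (delta_mx k 0) m 0.
suff Hu : forall k, u k = if k == tau m then N m else 0%N.
  rewrite (eq_bigr (fun k => u k * y k 0)) //.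
  rewrite (bigD1 (tau m)) //= big1 ?addr0; first by rewrite Hu eqxx.
  by move=> k kt; rewrite Hu (negbTE kt) mul0r.
have Hfun : forall p, P p ->
    ((i' p m 0)%:R : rat) = \sum_k (u k)%:R * dpair (toQ (v k)) p.
  move=> p Pp; rewrite (H' p Pp) free_lin // natr_sum; apply: eq_bigr => k _.
  rewrite natrM canon_mapE dpair_toQ.
  have H'' : (absz (ip (v k) p) : int) = ip (v k) p := gez0_abs (ipv0 _ _ Pp).
  by rewrite -[in RHS]H''.
pose U := \sum_k (u k)%:R *: toQ (v k).
have dpairU : forall p, dpair U p = \sum_k (u k)%:R * dpair (toQ (v k)) p.
  move=> p; rewrite dpair_dot.
  rewrite (big_morph (fun w => dot w (toQ p)) (fun a b => dotDl a b (toQ p)) (dot0l _)).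
  by apply: eq_bigr => k _; rewrite dotZl -dpair_dot.
have UT : U = W m.
  apply/eqP; rewrite -subr_eq0; apply/eqP; apply: (in_dual_zero HP) => p Pp.
  rewrite !dpair_dot dotBl -!dpair_dot dpairU -Hfun // dpair_dot -wfW -i'wf //.
  by rewrite subrr.
have [Tm Npos] := HNm m.
set t := tau m in Tm *.
have Dv : forall k, in_dual P (toQ (v k)) by move=> k; have [[_ Dk _] _] := Hv k.
have vn0 : forall k, toQ (v k) != 0 by move=> k; have [[nz _ _] _] := Hv k.
pose Nr : rat := (N m)%:R.
have Nr0 : 0 < Nr by rewrite ltr0n.
have Nri : 0 < Nr^-1 by rewrite invr_gt0.
have Hoff : forall k, k != t -> u k = 0%N.
  move=> k kt; apply/eqP; apply: contraT => uk0.
  pose R := \sum_(k' | k' != k) (u k')%:R *: toQ (v k').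
  have UR : U = (u k)%:R *: toQ (v k) + R by rewrite /U (bigD1 k).
  have DR : in_dual P R.
    apply: big_ind; [exact: in_dual0 | exact: in_dualD |].
    by move=> k' _; apply: in_dualZ; [rewrite ler0n | exact: Dv].
  have [[_ _ Hext] _] := Hv t.
  have ukp : (0 : rat) < (u k)%:R by rewrite ltr0n lt0n.
  have [c [c0 Ec]] := Hext ((u k)%:R / Nr *: toQ (v k)) (Nr^-1 *: R)
      (in_dualZ (ltW (divr_gt0 ukp Nr0)) (Dv k)) (in_dualZ (ltW Nri) DR)
      ltac:(by rewrite mulrC -scalerA -scalerDr -UR UT Tm scalerA mulVf ?scale1r // gt_eqF).
  have cn0 : c != 0.
    apply/eqP => cz; move: Ec; rewrite cz scale0r => /eqP.
    by rewrite scaler_eq0 (negbTE (vn0 k)) orbF mulf_eq0 invr_eq0 !gt_eqF.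
  have E : toQ (v k) = (c * Nr / (u k)%:R) *: toQ (v t).
    rewrite (_ : c * Nr / (u k)%:R = Nr / (u k)%:R * c); last by field; rewrite gt_eqF.
    rewrite -scalerA -Ec scalerA.
    rewrite (_ : Nr / (u k)%:R * ((u k)%:R / Nr) = 1) ?scale1r //.
    by field; rewrite !gt_eqF.
  have cpos : 0 < c * Nr / (u k)%:R by rewrite divr_gt0 // mulr_gt0 // lt_def cn0 c0.
  have Ekt := Hinj (same_ray (Hv k) (Hv t) cpos E).
  by move: kt; rewrite Ekt eqxx.
have Ht : u t = N m.
  have : U = (u t)%:R *: toQ (v t).
    by rewrite /U (bigD1 t) //= big1 ?addr0 // => k kt; rewrite Hoff // scale0r.
  rewrite UT Tm => /eqP; rewrite -subr_eq0 -scalerBl scaler_eq0 (negbTE (vn0 t)) orbF.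
  by rewrite subr_eq0 eqr_nat => /eqP.
by move=> k; case: eqP => [->|/eqP kt]; [exact: Ht | exact: Hoff].
Qed.
End Part2.


Theorem proposition2p2 (n : nat) (P : 'cV[int]_n -> Prop)
    (HP : toric_sharp_saturated P)
    (d : nat) (v : 'I_d -> 'cV[int]_n)
    (Hinj : injective v)
    (Hv : forall k, first_lattice_point P (v k))
    (Hall : forall u, extremal_ray P u ->
              exists k (c : rat), 0 < c /\ u = c *: toQ (v k)) :
  (monoid_mor P (canon_map v) /\ exact_mor P (canon_map v)) /\
  forall i' : 'cV[int]_n -> 'cV[nat]_d,
    monoid_mor P i' -> exact_mor P i' ->
    exists j : 'cV[nat]_d -> 'cV[nat]_d,
      [/\ free_mor j,
          (forall p, P p -> i' p = j (canon_map v p)) &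
          forall j' : 'cV[nat]_d -> 'cV[nat]_d, free_mor j' ->
            (forall p, P p -> i' p = j' (canon_map v p)) -> j' =1 j].
Proof.
split; first exact: (part1 HP Hv Hall).
move=> i' Hmon Hex; eapply part2; eassumption.
Qed.
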